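(* Let $t$ be a positive integer and let $M$ be a $t$-spike of order $r$. Then $r(M) = r^*(M) = r$, where $r^*$ denotes the rank function of the dual $M^*$.
   Context: For a positive integer $t$, a matroid $M$ is a $t$-spike of order $r$ (where $r\ge t$) if there is a partition $(A_1,\ldots,A_r)$ of $E(M)$ into 2-element sets (arms) such that, for every $t$-element subset $J\subseteq\{1,\dots,r\}$, the set $\bigcup_{j\in J}A_j$ is both a circuit and a cocircuit of $M$. *)

(* Defs.v *)
From mathcomp Require Import all_boot.
Set Implicit Arguments. Unset Strict Implicit. Unset Printing Implicit Defensive.

(* A matroid on the ground set E(M) = the whole finite type T,
   given by its independent sets. *)
Record matroid (T : finType) := Matroid {
  indep : {set T} -> bool;
  indep0 : indep set0;
  indep_sub : forall A B : {set T}, A \subset B -> indep B -> indep A;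
  indep_aug : forall A B : {set T}, indep A -> indep B -> #|A| < #|B| ->
    exists2 x, x \in B :\: A & indep (x |: A)
}.

Section MatroidDefs.
Variables (T : finType) (M : matroid T).

Definition mrank (X : {set T}) : nat :=
  \max_(Y : {set T} | (Y \subset X) && indep M Y) #|Y|.

Definition rk : nat := mrank setT.

Definition circuit (C : {set T}) : Prop :=
  ~~ indep M C /\ forall D : {set T}, D \proper C -> indep M D.

(* Dual matroid M^*: I is independent in M^* iff E - I is spanning in M,
   i.e. contains a basis of M. *)
Definition spanning (S : {set T}) : bool := mrank S == rk.
Definition dual_indep (I : {set T}) : bool := spanning (~: I).

Definition dual_mrank (X : {set T}) : nat :=
  \max_(Y : {set T} | (Y \subset X) && dual_indep Y) #|Y|.
Definition corank : nat := dual_mrank setT.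

Definition cocircuit (C : {set T}) : Prop :=
  ~~ dual_indep C /\ forall D : {set T}, D \proper C -> dual_indep D.

End MatroidDefs.

Definition is_spike_with (T : finType) (M : matroid T) (t r : nat)
    (A : 'I_r -> {set T}) : Prop :=
  [/\ 0 < t, t <= r,
      (forall i, #|A i| = 2),
      (forall i j, i != j -> [disjoint A i & A j]) &
      (\bigcup_(i < r) A i = setT)] /\
      (forall J : {set 'I_r}, #|J| = t ->
         circuit M (\bigcup_(j in J) A j) /\ cocircuit M (\bigcup_(j in J) A j)).

Definition is_spike (T : finType) (M : matroid T) (t r : nat) : Prop :=
  exists A : 'I_r -> {set T}, @is_spike_with T M t r A.

(* Main.v *)
Require Import Defs.
From mathcomp Require Import all_boot zify.
Set Implicit Arguments. Unset Strict Implicit. Unset Printing Implicit Defensive.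

Section Gen.
Variables (T : finType) (M : matroid T).
Local Notation r := (mrank M).

Lemma mrank_ge (X Y : {set T}) : Y \subset X -> indep M Y -> #|Y| <= r X.
Proof. by move=> h1 h2; rewrite /mrank; apply: (bigmax_sup Y) => //; rewrite h1 h2. Qed.

Lemma mrank_wit (X : {set T}) : exists2 Y : {set T}, (Y \subset X) && indep M Y & r X = #|Y|.
Proof.
rewrite /mrank (bigmax_eq_arg set0); last by rewrite sub0set indep0.
by case: arg_maxnP; [rewrite sub0set indep0| move=> i Pi _; exists i].
Qed.

Lemma mrank_card (X : {set T}) : r X <= #|X|.
Proof. by case: (mrank_wit X) => Y /andP[h _] ->; apply: subset_leq_card. Qed.

Lemma mrank_mono (X Z : {set T}) : X \subset Z -> r X <= r Z.
Proof.
move=> h; case: (mrank_wit X) => Y /andP[h1 h2] ->; apply: mrank_ge => //.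
exact: subset_trans h.
Qed.

Lemma mrank_indepE (X : {set T}) : indep M X -> r X = #|X|.
Proof. by move=> h; apply/eqP; rewrite eqn_leq mrank_card mrank_ge. Qed.

Lemma mrank_rk (X : {set T}) : r X <= rk M.
Proof. by apply: mrank_mono; apply: subsetT. Qed.

Lemma mrank_add1 e (X : {set T}) : r (e |: X) <= (r X).+1.
Proof.
case: (mrank_wit (e |: X)) => Y /andP[h1 h2] ->.
have h3 : Y :\ e \subset X.
  apply/subsetP => x; rewrite !inE => /andP[ne xY].
  by move/subsetP: h1 => /(_ x xY); rewrite !inE (negPf ne).
have := mrank_ge h3 (indep_sub (subD1set Y e) h2).
by rewrite (cardsD1 e Y); case: (e \in Y) => /=; lia.
Qed.

Lemma augment n (A B : {set T}) : indep M A -> indep M B -> #|A| + n = #|B| ->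
  exists A' : {set T}, [/\ A \subset A', A' \subset A :|: B, indep M A' & #|A'| = #|B|].
Proof.
elim: n A => [|n IH] A hA hB hc.
  by exists A; rewrite -hc addn0 subxx subsetUl.
have [x] := indep_aug hA hB (ltac:(lia) : #|A| < #|B|).
rewrite !inE => /andP[xA xB] hxA.
have [A' [s1 s2 i3 c4]] := IH (x |: A) hxA hB (ltac:(rewrite cardsU1 xA; lia)).
exists A'; split => //.
  by apply: subset_trans s1; apply: subsetUr.
apply: (subset_trans s2); apply/subsetP => y; rewrite !inE.
by case/orP => [/orP[/eqP->|->]|->]; rewrite ?xB ?orbT.
Qed.

Lemma closure_mono (Y Z : {set T}) e : Y \subset Z -> r (e |: Y) = r Y -> r (e |: Z) = r Z.
Proof.
move=> sYZ hY; apply/eqP; rewrite eqn_leq; apply/andP; split; last first.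
  by apply: mrank_mono; apply: subsetUr.
rewrite leqNgt; apply/negP => hlt.
have hZ : r (e |: Z) = (r Z).+1 by have := mrank_add1 e Z; lia.
case: (mrank_wit (e |: Z)) => I /andP[sI iI] cI.
case: (mrank_wit Y) => J /andP[sJ iJ] cJ.
have hJZ : r Y <= r Z by apply: mrank_mono.
have [B [s1 s2 i3 c4]] := augment (n := #|I| - #|J|) iJ iI ltac:(lia).
have eB : e \in B.
  apply/negPn/negP => eB.
  have : B \subset Z.
    apply/subsetP => x xB; move/subsetP: s2 => /(_ x xB); rewrite inE.
    case/orP => [xJ|xI]; first by move/subsetP: sJ => /(_ x xJ) /(subsetP sYZ).
    move/subsetP: sI => /(_ x xI); rewrite !inE; case/orP => // /eqP ex.
    by move: eB; rewrite -ex xB.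
  move/mrank_ge => /(_ i3); lia.
have sJe : e |: J \subset B by rewrite subUset sub1set eB s1.
have ieJ := indep_sub sJe i3.
have : e |: J \subset e |: Y by apply: setUS.
move/mrank_ge => /(_ ieJ); rewrite cardsU1 hY.
have eJ : e \notin J.
  apply/negP => eJ; have : e \in Y by apply: (subsetP sJ).
  move=> eY; move: hlt; rewrite (setUidPr _) ?ltnn //.
  by rewrite sub1set; apply: (subsetP sYZ).
by rewrite eJ cJ; lia.
Qed.

Lemma circuit_closure (C : {set T}) e (Z : {set T}) : circuit M C -> e \in C -> C :\ e \subset Z -> r (e |: Z) = r Z.
Proof.
move=> [dC pC] eC sZ; apply: (closure_mono sZ).
rewrite setD1K //.
have iC := pC _ (properD1 eC).
apply/eqP; rewrite eqn_leq [X in _ && X]mrank_mono ?subD1set // andbT.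
rewrite (mrank_indepE iC).
case: (mrank_wit C) => Y /andP[sY iY] ->.
have : Y \proper C.
  rewrite properE sY /=; apply/negP => sCY.
  by move: dC; rewrite (indep_sub sCY iY).
by move/proper_card; rewrite (cardsD1 e C) eC.
Qed.

Lemma corankE : corank M = #|T| - rk M.
Proof.
apply/eqP; rewrite eqn_leq; apply/andP; split.
  apply/bigmax_leqP => Y /andP[_ /eqP hY].
  have := mrank_card (~: Y); rewrite hY; have := cardsC Y; lia.
case: (mrank_wit setT) => B /andP[_ iB] cB.
apply: (bigmax_sup (~: B)).
  by rewrite subsetT /=; rewrite /dual_indep /spanning setCK (mrank_indepE iB); apply/eqP; rewrite -cB.
have := cardsC B; have -> : rk M = #|B| by rewrite -cB. lia.
Qed.

End Gen.

Lemma pick_sub (I : finType) (U : {set I}) n : n <= #|U| -> exists2 L : {set I}, L \subset U & #|L| = n.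
Proof.
elim: n => [|n IH] h; first by exists set0; rewrite ?sub0set ?cards0.
have [L sL cL] := IH (ltnW h).
have : 0 < #|U :\: L| by rewrite cardsD (setIidPr sL); lia.
case/card_gt0P => x; rewrite inE => /andP[xL xU].
exists (x |: L); first by rewrite subUset sub1set xU sL.
by rewrite cardsU1 xL cL.
Qed.

Section Spike.
Variables (T : finType) (M : matroid T) (t r : nat) (A : 'I_r -> {set T}).
Hypotheses (ht : 0 < t) (htr : t <= r) (h2 : forall i, #|A i| = 2)
  (hd : forall i j, i != j -> [disjoint A i & A j])
  (hcov : \bigcup_(i < r) A i = setT)
  (hcc : forall J : {set 'I_r}, #|J| = t ->
         circuit M (\bigcup_(j in J) A j) /\ cocircuit M (\bigcup_(j in J) A j)).

Definition X (K : {set 'I_r}) := \bigcup_(j in K) A j.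

Lemma cover x : exists j, x \in A j.
Proof.
have : x \in \bigcup_(i < r) A i by rewrite hcov inE.
by case/bigcupP => j _ xj; exists j.
Qed.

Lemma memA x j a : x \in A j -> (x \in A a) = (j == a).
Proof.
move=> xj; case: (eqVneq j a) => [<-//|nja].
by rewrite (disjointFr (hd nja) xj).
Qed.

Lemma memX x j (K : {set 'I_r}) : x \in A j -> (x \in X K) = (j \in K).
Proof.
move=> xj; apply/bigcupP/idP => [[i iK xi]|jK]; last by exists j.
by move: xi; rewrite (memA _ xj) => /eqP ->.
Qed.

Lemma armne a : exists e, e \in A a.
Proof. by apply/card_gt0P; rewrite h2. Qed.

Lemma cardX n (K : {set 'I_r}) : #|K| = n -> #|X K| = 2 * n.
Proof.
elim: n K => [|n IH] K hK.
  move/eqP: hK; rewrite cards_eq0 => /eqP ->.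
  apply/eqP; rewrite muln0 cards_eq0; apply/eqP/setP => x; have [j xj] := cover x.
  by rewrite (memX _ xj) !inE.
have : 0 < #|K| by rewrite hK.
case/card_gt0P => a aK.
have hS : #|K :\ a| = n by move: hK; rewrite (cardsD1 a) aK; lia.
have -> : X K = A a :|: X (K :\ a).
  apply/setP => x; have [j xj] := cover x.
  rewrite inE !(memX _ xj) (memA _ xj) !inE; case: eqVneq => // ->; by rewrite aK.
rewrite cardsU h2 (IH _ hS).
have -> : A a :&: X (K :\ a) = set0.
  apply/setP => x; have [j xj] := cover x.
  by rewrite !inE (memX _ xj) (memA _ xj) !inE; case: eqVneq.
rewrite cards0; lia.
Qed.

Lemma cardT : #|T| = 2 * r.
Proof. rewrite -cardsT.
have <- : X setT = setT by apply/setP => x; have [j xj] := cover x; rewrite (memX _ xj) !inE.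
by rewrite (cardX (n := r)) // cardsT card_ord.
Qed.

Lemma XC (K : {set 'I_r}) : ~: X K = X (~: K).
Proof. by apply/setP => x; have [j xj] := cover x; rewrite inE !(memX _ xj) inE. Qed.

Lemma bound : 2 * t - 1 <= 2 * r - 2 * t + 1.
Proof.
have [J _ cJ] := pick_sub (U := [set: 'I_r]) (n := t) ltac:(by rewrite cardsT card_ord).
have [[dC pC] [dD pD]] := hcc cJ.
have : 0 < #|J| by rewrite cJ.
case/card_gt0P => j jJ; have [e ej] := armne j.
have eX : e \in X J by rewrite (memX _ ej).
have c1 := pC _ (properD1 eX).
have c2 := pD _ (properD1 eX).
have k1 := mrank_ge (subsetT _) c1.
move: c2; rewrite /dual_indep /spanning => /eqP c2.
have k2 := mrank_card M (~: (X J :\ e)).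
have := cardsC (X J :\ e); have := cardsD1 e (X J); rewrite eX (cardX cJ) cardT.
have := mrank_rk M (X J :\ e).
move: k1 k2; rewrite c2 /rk; lia.
Qed.

Lemma mainind n (K : {set 'I_r}) : #|K| = t - 1 + n -> #|K| <= r - t + 1 -> mrank M (X K) = #|K| + (t - 1).
Proof.
elim: n K => [|n IH] K hK hKr.
  have : 0 < #|~: K| by have := cardsC K; rewrite card_ord; lia.
  case/card_gt0P => b; rewrite inE => bK.
  have cJ : #|b |: K| = t by rewrite cardsU1 bK; lia.
  have [[_ pC] _] := hcc cJ.
  have [e eb] := armne b.
  have iK : indep M (X K).
    apply: pC; apply/properP; split.
      by apply/subsetP => x; have [j xj] := cover x; rewrite !(memX _ xj) inE => ->; rewrite orbT.
    by exists e; rewrite !(memX _ eb) ?inE ?eqxx // bK.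
  rewrite (mrank_indepE iK) (cardX (erefl _)); lia.
have : 0 < #|K| by lia.
case/card_gt0P => a aK.
have hS : #|(K :\ a)| = t - 1 + n by move: hK; rewrite (cardsD1 a K) aK /=; lia.
have IHS := IH (K :\ a) hS ltac:(lia).
have := h2 a; move/eqP/cards2P => [e [f [nef hA]]].
have ea : e \in A a by rewrite hA !inE eqxx.
have fa : f \in A a by rewrite hA !inE eqxx orbT.
have XKe : X K = e |: (f |: X (K :\ a)).
  apply/setP => x; have [j xj] := cover x.
  rewrite !inE orbA.
  have -> : (x == e) || (x == f) = (x \in A a) by rewrite hA !inE.
  rewrite (memA _ xj) !(memX _ xj) !inE; case: eqVneq => // ->; by rewrite aK.
have up : mrank M (X K) <= (mrank M (X (K :\ a))).+1.
  have [L sL cL] := pick_sub (U := K :\ a) (n := t - 1) ltac:(lia).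
  have aL : a \notin L by apply/negP => /(subsetP sL); rewrite !inE eqxx.
  have cJ : #|a |: L| = t by rewrite cardsU1 aL; lia.
  have [[dC pC] _] := hcc cJ.
  have eC : e \in X (a |: L) by rewrite (memX _ ea) !inE eqxx.
  have sub : X (a |: L) :\ e \subset f |: X (K :\ a).
    apply/subsetP => x; have [j xj] := cover x.
    rewrite !inE !(memX _ xj) !inE => /andP[nxe /orP[/eqP ja|jL]].
      by move: xj; rewrite ja hA !inE (negPf nxe) /= => ->.
    by have := subsetP sL _ jL; rewrite !inE => ->; rewrite orbT.
  have := circuit_closure (conj dC pC) eC sub.
  rewrite XKe => ->; exact: mrank_add1.
have lo : (mrank M (X (K :\ a))).+1 <= mrank M (X K).
  have [L sL cL] := pick_sub (U := ~: K) (n := t - 1)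
    ltac:(by have := cardsC K; rewrite card_ord; lia).
  have aL : a \notin L by apply/negP => /(subsetP sL); rewrite !inE aK.
  have cJ : #|a |: L| = t by rewrite cardsU1 aL; lia.
  have [_ [nd pd]] := hcc cJ.
  have eD : e \in X (a |: L) by rewrite (memX _ ea) !inE eqxx.
  have := pd _ (properD1 eD); rewrite /dual_indep /spanning => /eqP sp.
  move: nd; rewrite /dual_indep /spanning => nd.
  have eq1 : ~: (X (a |: L) :\ e) = e |: ~: X (a |: L).
    by apply/setP => x; rewrite !inE; case: eqVneq.
  have sub : X (K :\ a) \subset ~: X (a |: L).
    apply/subsetP => x; have [j xj] := cover x.
    rewrite !inE !(memX _ xj) !inE => /andP[nja jK]; rewrite (negPf nja) /=.
    by apply/negP => /(subsetP sL); rewrite inE jK.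
  rewrite ltnNge; apply/negP => hle.
  have hcl : mrank M (e |: X (K :\ a)) = mrank M (X (K :\ a)).
    apply/eqP; rewrite eqn_leq (mrank_mono M (subsetUr _ _)) andbT.
    apply: leq_trans hle; apply: mrank_mono; rewrite XKe.
    by apply/subsetP => x; rewrite !inE; case/orP => ->; rewrite ?orbT.
  have := closure_mono sub hcl; rewrite -eq1 sp.
  by move=> h; move: nd; rewrite h eqxx.
lia.
Qed.

Lemma rk_spike : rk M = r.
Proof.
have hb := bound.
have [K _ cK] := pick_sub (U := [set: 'I_r]) (n := r - t + 1) ltac:(by rewrite cardsT card_ord; lia).
have hK := mainind (n := r - t + 1 - (t - 1)) (K := K) ltac:(lia) ltac:(lia).
have : 0 < #|K| by lia.
case/card_gt0P => b bK.
have cJ : #|b |: ~: K| = t.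
  have c2 : #|~: K| = t - 1 by have := cardsC K; rewrite card_ord; lia.
  rewrite cardsU1 inE bK c2 /=; lia.
have [_ [_ pd]] := hcc cJ.
have [e eb] := armne b.
have : dual_indep M (X (~: K)).
  apply: pd; apply/properP; split.
    by apply/subsetP => x; have [j xj] := cover x; rewrite !(memX _ xj) !inE => h; apply/orP; right.
  by exists e; rewrite !(memX _ eb) ?inE ?eqxx // bK.
rewrite /dual_indep /spanning XC setCK => /eqP <-.
rewrite hK cK; lia.
Qed.

End Spike.

Theorem lemma6p2 (T : finType) (M : matroid T) (t r : nat) :
  0 < t -> is_spike M t r -> rk M = r /\ corank M = r.
Proof.
move=> ht [A [[_ htr h2 hd hcov] hcc]].
have hr := @rk_spike T M t r A ht htr h2 hd hcov hcc.
have hT : #|T| = 2 * r by apply: (@cardT T t r A).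
split => //; rewrite corankE hr hT; lia.
Qed.
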